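(* Let $n=2^s$, $q=2^r$ ($s,r$ positive integers). The map $\mathbb{F}_q\to C^{\perp}(SL(n,q))$, $a\mapsto c(a)=(tr(a\,Tr(g_1)),\dots,tr(a\,Tr(g_N)))$, is an $\mathbb{F}_2$-linear isomorphism.
   Context: $\mathbb{F}_q$ is the field with $q$ elements and $tr:\mathbb{F}_q\to\mathbb{F}_2$ the absolute trace. $N=|SL(n,q)|$, $g_1,\dots,g_N$ is a fixed ordering of $SL(n,q)$, $Tr$ is the matrix trace, $v=(Tr(g_1),\dots,Tr(g_N))\in\mathbb{F}_q^N$, $C(SL(n,q))=\{u\in\mathbb{F}_2^N:u\cdot v=0\}$ (dot product in $\mathbb{F}_q$), and $C^\perp(SL(n,q))$ is its dual in $\mathbb{F}_2^N$ under the standard inner product. *)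

(* Defs.v *)
From HB Require Import structures.
From mathcomp Require Import all_boot all_order all_algebra all_fingroup all_field.
Set Implicit Arguments. Unset Strict Implicit. Unset Printing Implicit Defensive.
Import GRing.Theory.
Local Open Scope ring_scope.

(* SL(n,F): the finite type of n x n matrices over F of determinant 1.
   The fixed ordering g_1..g_N of the paper is replaced by indexing
   vectors of F_2^N by the finite type SL n F itself. *)
Notation SL n F := {A : 'M[F]_n | \det A == 1}.

Definition f2F {F : finFieldType} (b : 'F_2) : F := (val b)%:R.

(* absolute trace F_q -> F_2 for q = 2^r: tr x = sum_{i<r} x^(2^i),
   which lies in {0,1}; we return it as an element of 'F_2 *)
Definition trF (F : finFieldType) (r : nat) (x : F) : F :=
  \sum_(i < r) x ^+ (2 ^ i).
Definition abstr (F : finFieldType) (r : nat) (x : F) : 'F_2 :=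
  if trF r x == 0 then 0 else 1.

Definition codeC (n : nat) (F : finFieldType) : {set {ffun SL n F -> 'F_2}} :=
  [set u : {ffun SL n F -> 'F_2} | \sum_(g : SL n F) f2F (u g) * \tr (val g) == 0].

Definition codeCperp (n : nat) (F : finFieldType) : {set {ffun SL n F -> 'F_2}} :=
  [set w : {ffun SL n F -> 'F_2} | [forall u in codeC n F, \sum_(g : SL n F) u g * w g == 0]].

Definition cword (n r : nat) (F : finFieldType) (a : F) : {ffun SL n F -> 'F_2} :=
  [ffun g => abstr r (a * \tr (val g))].

(* Main.v *)
Require Import Defs.
From HB Require Import structures.
From mathcomp Require Import all_boot all_order all_algebra all_fingroup all_field.
From mathcomp Require Import zify.
Set Implicit Arguments. Unset Strict Implicit. Unset Printing Implicit Defensive.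
Import GRing.Theory.
Local Open Scope ring_scope.

Section Basics.
Variables (r : nat) (F : finFieldType).
Hypothesis hr : (0 < r)%N.
Hypothesis hF : #|F| = (2 ^ r)%N.

Lemma char2 : 2 \in [pchar F].
Proof. exact: (card_finPcharP hF). Qed.

Lemma two0 : (2%:R : F) = 0.
Proof. exact: (pcharf0 char2). Qed.

Lemma addxx (x : F) : x + x = 0.
Proof. by rewrite -mulr2n -mulr_natl two0 mul0r. Qed.

Lemma frob (x y : F) i : (x + y) ^+ (2 ^ i) = x ^+ (2 ^ i) + y ^+ (2 ^ i).
Proof.
elim: i => [|i IH]; first by rewrite !expr1.
rewrite expnSr !exprM IH exprDn_pchar //.
by rewrite pnatE // ?char2 // (pcharf_prime char2).
Qed.

Lemma trFD (x y : F) : trF r (x + y) = trF r x + trF r y.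
Proof. by rewrite /trF -big_split; apply: eq_bigr => i _; rewrite frob. Qed.

Lemma trF0 : trF r (0 : F) = 0.
Proof. by rewrite /trF big1 // => i _; rewrite expr0n expn_eq0. Qed.

Lemma sq_sum (I : finType) (G : I -> F) : (\sum_i G i) ^+ 2 = \sum_i G i ^+ 2.
Proof.
apply: (big_morph (fun z => z ^+ 2)); last by rewrite expr0n.
by move=> a b; have := frob a b 1; rewrite expn1.
Qed.

Lemma trF_sq (x : F) : trF r x ^+ 2 = trF r x.
Proof.
rewrite /trF sq_sum.
under eq_bigr => i _ do rewrite -exprM -expnSr.
have xr : x ^+ (2 ^ r) = x by rewrite -hF expf_card.
move: xr; rewrite -(prednK hr) => xr.
rewrite big_ord_recr /= xr [RHS]big_ord_recl /= expn0 expr1 addrC.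
congr (_ + _); apply: eq_bigr => i _; by rewrite /bump /=.
Qed.

Lemma trF01 (x : F) : trF r x = 0 \/ trF r x = 1.
Proof.
have := trF_sq x; rewrite expr2 => /eqP.
rewrite -subr_eq0 -[X in _ - X](mulr1 (trF r x)) -mulrBr mulf_eq0 subr_eq0.
by case/orP => /eqP ->; [left|right].
Qed.


Lemma F2cases (b : 'F_2) : b = 0 \/ b = 1.
Proof. by case: b => [[|[|k]] Hk]; [left|right|]; try apply/val_inj. Qed.

Lemma F2_11 : (1 + 1 : 'F_2) = 0.
Proof. by apply/val_inj. Qed.

Lemma f2F0 : f2F (0 : 'F_2) = (0 : F).
Proof. by rewrite /f2F. Qed.

Lemma f2F1 : f2F (1 : 'F_2) = (1 : F).
Proof. by rewrite /f2F. Qed.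

Lemma abstr0 : abstr r (0 : F) = 0.
Proof. by rewrite /abstr trF0 eqxx. Qed.

Lemma abstrD (x y : F) : abstr r (x + y) = abstr r x + abstr r y.
Proof.
rewrite /abstr trFD.
by case: (trF01 x) => ->; case: (trF01 y) => ->;
  rewrite ?addr0 ?add0r ?addxx ?eqxx ?oner_eq0 /= ?F2_11 ?addr0 ?add0r.
Qed.

Lemma abstr_sum (I : finType) (G : I -> F) :
  abstr r (\sum_i G i) = \sum_i abstr r (G i).
Proof. exact: (big_morph _ abstrD abstr0). Qed.

Lemma f2F_abstr (x : F) : f2F (abstr r x) = trF r x.
Proof. by rewrite /abstr; case: (trF01 x) => ->; rewrite ?eqxx ?oner_eq0 /= ?f2F0 ?f2F1. Qed.

Lemma f2FD (a b : 'F_2) : f2F (a + b) = f2F a + f2F b :> F.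
Proof.
case: (F2cases a) => ->; case: (F2cases b) => ->;
  rewrite ?addr0 ?add0r ?F2_11 ?f2F0 ?f2F1 ?addr0 ?add0r ?addxx //.
Qed.

Lemma f2FM (a b : 'F_2) : f2F (a * b) = f2F a * f2F b :> F.
Proof.
case: (F2cases a) => ->; case: (F2cases b) => ->;
  rewrite ?mulr0 ?mul0r ?mulr1 ?f2F0 ?f2F1 ?mulr0 ?mul0r ?mulr1 //.
Qed.

Lemma f2F_sum (I : finType) (G : I -> 'F_2) :
  f2F (\sum_i G i) = \sum_i f2F (G i) :> F.
Proof. exact: (big_morph _ f2FD f2F0). Qed.

Lemma abstr_f2F (b : 'F_2) (y : F) : abstr r (f2F b * y) = b * abstr r y.
Proof. by case: (F2cases b) => ->; rewrite ?f2F0 ?f2F1 ?mul0r ?mul1r ?abstr0. Qed.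


Lemma trF_nonzero : exists y : F, trF r y != 0.
Proof.
have [/existsP //|] := boolP [exists y : F, trF r y != 0].
rewrite negb_exists => /forallP /= H.
pose P : {poly F} := \sum_(i < r) 'X^(2 ^ i).
have Pnz : P != 0.
  apply/eqP => P0; have := congr1 (fun p : {poly F} => p`_1) P0.
  rewrite coef_sum coef0 (bigD1 (Ordinal hr)) //= big1 ?addr0; last first.
    move=> i /eqP ne; rewrite coefXn; case: eqP => //= h.
    exfalso; apply: ne; apply/val_inj => /=.
    by case: (nat_of_ord i) h => // k; rewrite expnS; case: (2 ^ k)%N => [|[|m]].
  by rewrite coefXn expn0 eqxx => /eqP; rewrite oner_eq0.
have Psz : (size P <= (2 ^ r.-1).+1)%N.
  apply/leq_sizeP => j hj; rewrite coef_sum big1 // => i _; rewrite coefXn.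
  case: eqP => // ej; exfalso; move: hj; rewrite ej ltnNge.
  by move=> /negP; apply; rewrite leq_exp2l // -ltnS prednK.
have := max_poly_roots Pnz _ (enum_uniq F).
have -> : all (root P) (enum F).
  apply/allP => y _; rewrite /root horner_sum.
  under eq_bigr => i _ do rewrite hornerXn.
  by have := H y; rewrite negbK.
move=> /(_ isT); rewrite -cardE hF => h.
have := leq_trans h Psz; rewrite -{1}(prednK hr) expnS.
move=> hh; exfalso; have := expn_gt0 2 r.-1; lia.
Qed.


Lemma trF_nondeg (a : F) : (forall x, trF r (a * x) = 0) -> a = 0.
Proof.
move=> H; apply/eqP; apply/negPn/negP => a0.
have [y hy] := trF_nonzero.
by move: hy; rewrite -(mulVKf a0 y) H eqxx.
Qed.

Lemma mx_trace_gen m (t : F) :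
  exists A : 'M[F]_(m.+2), \det A = 1 /\ \tr A = t + m%:R.
Proof.
pose B : 'M[F]_2 := \matrix_(i, j) if i == 0 then (if j == 0 then t else -1)
                                   else (if j == 0 then 1 else 0).
have dB : \det B = 1.
  rewrite (expand_det_row B 1) big_ord_recl big_ord_recl big_ord0 addr0.
  rewrite /cofactor det_mx11 !mxE /=.
  by rewrite mul0r addr0 mul1r /= expr1 mulN1r opprK.
have tB : \tr B = t.
  by rewrite /mxtrace big_ord_recl big_ord_recl big_ord0 !mxE /= !addr0.
have h1 : \det (block_mx B 0 0 (1%:M : 'M_m)) = 1.
  by rewrite det_ublock dB det1 mulr1.
have h2 : \tr (block_mx B 0 0 (1%:M : 'M_m)) = t + m%:R.
  by rewrite mxtrace_block tB mxtrace1.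
by exists (block_mx B 0 0 (1%:M : 'M_m)); split.
Qed.


Lemma SL_trace s (hs : (0 < s)%N) (t : F) : exists g : SL (2 ^ s) F, \tr (val g) = t.
Proof.
have e2 : (2 ^ s = 2 * 2 ^ s.-1)%N by rewrite -expnS prednK.
have k1 := expn_gt0 2 s.-1.
have e : (2 ^ s = (2 ^ s - 2).+2)%N by lia.
have em : ((2 ^ s - 2) %% 2 = 0)%N.
  rewrite e2; move: k1; set k := (2 ^ s.-1)%N => k1.
  have -> : (2 * k - 2 = 2 * (k - 1))%N by lia.
  by rewrite modnMr.
rewrite e.
have [A [dA tA]] := mx_trace_gen (2 ^ s - 2) t.
have dA' : \det A == 1 by rewrite dA.
exists (exist _ A dA') => /=.
by rewrite tA -(GRing.natr_mod_pchar char2) em addr0.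
Qed.

End Basics.

Lemma sum_delta (T : finType) (R : pzRingType) (a : T) (w : T -> R) :
  \sum_h ((h == a)%:R * w h) = w a.
Proof.
rewrite (bigD1 a) //= eqxx mul1r big1 ?addr0 // => h /negbTE ->.
by rewrite mul0r.
Qed.

Lemma oppF2 (b : 'F_2) : - b = b.
Proof. by case: (F2cases b) => ->; [rewrite oppr0 | apply/val_inj]. Qed.

Lemma f2F_nat (F : finFieldType) (b : bool) : f2F (b%:R : 'F_2) = b%:R :> F.
Proof. by case: b; rewrite ?f2F1 ?f2F0. Qed.

Section Main.
Variables (s r : nat) (F : finFieldType).
Hypotheses (hs : (0 < s)%N) (hr : (0 < r)%N) (hF : #|F| = (2 ^ r)%N).
Local Notation n := (2 ^ s)%N.

Definition phi (u : {ffun SL n F -> 'F_2}) : F :=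
  \sum_g f2F (u g) * \tr (val g).

Lemma cwordD (a b : F) : cword n r (a + b) = cword n r a + cword n r b.
Proof. by apply/ffunP => g; rewrite !ffunE mulrDl (abstrD hr hF). Qed.

Lemma cword_inj : injective (cword n r (F := F)).
Proof.
move=> a b eab; apply/eqP; rewrite -subr_eq0; apply/eqP.
apply: (trF_nondeg hr hF) => x.
have [g <-] := SL_trace hr hF hs x.
have := congr1 (fun w : {ffun SL n F -> 'F_2} => f2F (w g) : F) eab; rewrite !ffunE /= !(f2F_abstr hr hF).
have -> : a * \tr (val g) = (a - b) * \tr (val g) + b * \tr (val g).
  by rewrite -mulrDl subrK.
rewrite (trFD hF) => /eqP; rewrite -subr_eq0 addrK => /eqP //.
Qed.

Lemma cword_perp (a : F) : cword n r a \in codeCperp n F.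
Proof.
rewrite inE; apply/forallP => u; apply/implyP; rewrite inE => /eqP hu.
under eq_bigr => g _ do rewrite ffunE -(abstr_f2F r).
rewrite -(abstr_sum hr hF).
under eq_bigr => g _ do rewrite mulrCA.
by rewrite -mulr_sumr hu mulr0 (abstr0 r F).
Qed.


Lemma perp_img (w : {ffun SL n F -> 'F_2}) :
  w \in codeCperp n F -> exists a, cword n r a = w.
Proof.
have ch := char2 hF.
case: (pprimeChar_vectAxiom ch) => f lin_f [finv fK finvK].
have fD : forall x y : F, f (x + y) = f x + f y.
  by move=> x y; have := lin_f 1 x y; rewrite !scale1r.
have finvD : forall u v, finv (u + v) = finv u + finv v :> F.
  by move=> u v; apply: (can_inj fK); rewrite fD !finvK.
have finv0 : finv 0 = 0 :> F.
  have h := finvD 0 0; rewrite addr0 in h.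
  by apply: (addIr (finv 0)); rewrite add0r -h.
have finv_sum : forall (I : finType) (G : I -> _),
    finv (\sum_i G i) = \sum_i finv (G i) :> F.
  by move=> I G; apply: (big_morph _ finvD finv0).
have finvZ : forall (b : 'F_2) v, finv (b *: v) = f2F b * finv v :> F.
  move=> b v; case: (F2cases b) => ->; first by rewrite scale0r finv0 f2F0 mul0r.
  by rewrite scale1r f2F1 mul1r.
pose e i : F := finv (delta_mx 0 i).
have decomp : forall x : F, x = \sum_i f2F (f x 0 i) * e i.
  move=> x; rewrite -{1}(fK x) {1}(row_sum_delta (f x)) finv_sum.
  by apply: eq_bigr => i _; rewrite finvZ.
have ex : forall t : F, exists g : SL n F, \tr (val g) == t.
  by move=> t; have [g hg] := SL_trace hr hF hs t; exists g; rewrite hg.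
pose gsel t := xchoose (ex t).
have gselP : forall t, \tr (val (gsel t)) = t by move=> t; exact: (eqP (xchooseP (ex t))).
have key : forall w, w \in codeCperp n F -> forall g,
    w g = \sum_i f (\tr (val g)) 0 i * w (gsel (e i)).
  move=> w' hw g; move: hw; rewrite inE => /forallP hw.
  pose u : {ffun SL n F -> 'F_2} := [ffun h => (h == g)%:R +
      \sum_i f (\tr (val g)) 0 i * (h == gsel (e i))%:R].
  have uC : u \in codeC n F.
    rewrite inE.
    rewrite (eq_bigr (fun h => (h == g)%:R * \tr (val h) + \sum_i
       f2F (f (\tr (val g)) 0 i) * ((h == gsel (e i))%:R * \tr (val h)))); last first.
      move=> h _; rewrite ffunE (f2FD hF) (f2F_sum hF) f2F_nat mulrDl mulr_suml.
      by congr (_ + _); apply: eq_bigr => i _; rewrite f2FM f2F_nat mulrA.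
    rewrite big_split /= sum_delta exchange_big /=.
    under eq_bigr => i _ do rewrite -mulr_sumr sum_delta gselP.
    by rewrite -decomp (addxx hF).
  have := hw u; rewrite uC /= => /eqP h0.
  rewrite (eq_bigr (fun h => (h == g)%:R * w' h + \sum_i
       f (\tr (val g)) 0 i * ((h == gsel (e i))%:R * w' h))) in h0; last first.
    move=> h _; rewrite ffunE mulrDl mulr_suml.
    by congr (_ + _); apply: eq_bigr => i _; rewrite mulrA.
  move: h0; rewrite big_split /= sum_delta exchange_big /=.
  under eq_bigr => i _ do rewrite -mulr_sumr sum_delta.
  by move/eqP; rewrite addr_eq0 oppF2 => /eqP.
pose Psi (w : {ffun SL n F -> 'F_2}) := \row_i w (gsel (e i)).
have Psi_inj : {in codeCperp n F &, injective Psi}.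
  move=> w1 w2 h1 h2 hP; apply/ffunP => g.
  rewrite (key _ h1) (key _ h2); apply: eq_bigr => i _.
  by have := congr1 (fun m : 'rV['F_2]_ _ => m 0 i) hP; rewrite /Psi !mxE => ->.
have cperp : (#|codeCperp n F| <= #|F|)%N.
  apply: leq_trans (@leq_card_in _ _ Psi _ Psi_inj) _.
  rewrite card_mx card_Fp // mul1n.
  by rewrite [X in (_ <= X)%N](card_pprimeChar ch).
pose S := [set cword n r a | a : F].
have SC : S \subset codeCperp n F.
  by apply/subsetP => x /imsetP [a _ ->]; apply: cword_perp.
have cS : #|S| = #|F| by rewrite card_imset //; apply: cword_inj.
have : S == codeCperp n F by rewrite eqEcard SC cS cperp.
move/eqP => <- /imsetP [a _ ->]; by exists a.
Qed.

End Main.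

Theorem proposition7 (s r : nat) (hs : (0 < s)%N) (hr : (0 < r)%N)
    (F : finFieldType) (hF : #|F| = (2 ^ r)%N) :
  let n := (2 ^ s)%N in
  (* F_2-linear (additive; the only scalars are 0 and 1) *)
  (forall a b : F, cword n r (a + b) = cword n r a + cword n r b) /\
  (* injective *)
  injective (cword n r (F := F)) /\
  (* its image is exactly C^perp(SL(n,q)) *)
  (forall w : {ffun SL n F -> 'F_2},
      w \in codeCperp n F <-> exists a : F, cword n r a = w).
Proof.
move=> n; split; first exact: (cwordD s hr hF).
split; first exact: (cword_inj hs hr hF).
move=> w; split; first exact: (perp_img hs hr hF).
by case=> a <-; exact: (cword_perp s hr hF).
Qed.
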